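(* Let $V \subseteq \mathbb{R}^7$ be a linear subspace, let $V\lrcorner\varphi = \{v\lrcorner\varphi : v\in V\}$ and $\Lambda^2(V) = \mathrm{Span}\{u\wedge v : u,v\in V\}$, both subspaces of $\Lambda^2(\mathbb{R}^7)$. Then: - if $V = \mathbb{R}^7$, then $\Lambda^2(V)\cap(V\lrcorner\varphi) = \Lambda^2_7$; - if $V$ is a proper subspace, then $\Lambda^2(V)\cap(V\lrcorner\varphi) = \{0\}$.
   Context: Equip $\mathbb{R}^7$ with its standard inner product and basis. Let $\varphi = e_{123} - e_{167} - e_{527} - e_{563} - e_{415} - e_{426} - e_{437}$ ($e_{ijk} = e_i\wedge e_j\wedge e_k$). For $u,v$: $u\wedge v$ is the 2-form $(a,b)\mapsto \langle u,a\rangle\langle v,b\rangle - \langle u,b\rangle\langle v,a\rangle$; $u\lrcorner\varphi$ is the 2-form $(a,b)\mapsto\varphi(u,a,b)$. $\Lambda^2_7 = \{u\lrcorner\varphi : u\in\mathbb{R}^7\}$. *)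

(* Defs.v *)
(* Vectors of R^7 are row vectors 'rV[R]_7 (e_1..e_7 are the
   unit rows delta_mx 0 0 .. delta_mx 0 6).  A 2-form omega on R^7 is represented
   by its (antisymmetric) Gram matrix M : 'M[R]_7, i.e. omega(a,b) = a M b^T. *)
From HB Require Import structures.
From mathcomp Require Import all_boot all_order all_algebra.
From mathcomp Require Import reals.
Set Implicit Arguments. Unset Strict Implicit. Unset Printing Implicit Defensive.
Import Order.TTheory GRing.Theory Num.Theory.
Local Open Scope ring_scope.

Section G2.
Variable R : realType.

Definition coord7 (a : 'rV[R]_7) (i : nat) : R := a ord0 (inord i.-1).

Definition e3 (i j k : nat) (a b c : 'rV[R]_7) : R :=
  coord7 a i * (coord7 b j * coord7 c k - coord7 b k * coord7 c j)
  - coord7 a j * (coord7 b i * coord7 c k - coord7 b k * coord7 c i)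
  + coord7 a k * (coord7 b i * coord7 c j - coord7 b j * coord7 c i).

Definition phi (a b c : 'rV[R]_7) : R :=
  e3 1 2 3 a b c - e3 1 6 7 a b c - e3 5 2 7 a b c - e3 5 6 3 a b c
  - e3 4 1 5 a b c - e3 4 2 6 a b c - e3 4 3 7 a b c.

Definition form_of (M : 'M[R]_7) (a b : 'rV[R]_7) : R := (a *m M *m b^T) ord0 ord0.

Definition wedge (u v : 'rV[R]_7) : 'M[R]_7 := u^T *m v - v^T *m u.

Definition hook (u : 'rV[R]_7) : 'M[R]_7 :=
  \matrix_(i < 7, j < 7) phi u (delta_mx ord0 i) (delta_mx ord0 j).

Definition Lambda2 (V : {vspace 'rV[R]_7}) (M : 'M[R]_7) : Prop :=
  exists n (c : 'I_n -> R) (u w : 'I_n -> 'rV[R]_7),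
    (forall k, u k \in V /\ w k \in V) /\ M = \sum_(k < n) c k *: wedge (u k) (w k).

Definition hookV (V : {vspace 'rV[R]_7}) (M : 'M[R]_7) : Prop :=
  exists2 v, v \in V & M = hook v.

Definition Lambda2_7 (M : 'M[R]_7) : Prop := exists u, M = hook u.

End G2.

(* Main.v *)
Require Import Defs.
From HB Require Import structures.
From mathcomp Require Import all_boot all_order all_algebra.
From mathcomp Require Import reals.
From mathcomp Require Import ring.
Import Order.TTheory GRing.Theory Num.Theory.
Local Open Scope ring_scope.

Section S.
Context {R : realType}.
Lemma exists_orth (V : {vspace 'rV[R]_7}) : V != fullv ->
  exists2 w : 'rV[R]_7, w != 0 & forall u, u \in V -> u *m w^T = 0.
Proof.
move=> VF.
pose d := \dim V.
pose B : 'M[R]_(7, d) := \matrix_(j, i) ((vbasis V)`_i) 0 j.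
pose f : 'Hom('rV[R]_7, 'rV[R]_d) := linfun (mulmxr B).
have hdim := limg_ker_dim f fullv.
have d7 : (d < 7)%N.
  rewrite ltnNge; apply: contra VF => h.
  by rewrite eqEdim subvf /= /d dimvf.
have him : (\dim (f @: fullv) <= d)%N.
  by apply: leq_trans (dimvS (subvf _)) _; rewrite dimvf /dim /= mul1n.
have hk : lker f != 0%VS.
  apply/negP => /eqP hk; move: hdim; rewrite hk capv0 dimv0 add0n dimvf /dim /= => h.
  by move: him; rewrite h mul1n leqNgt d7.
exists (vpick (lker f)); first by rewrite vpick0.
have := memv_pick (lker f); rewrite memv_ker lfunE /= => /eqP hw.
move=> u /coord_vbasis ->.
rewrite mulmx_suml; apply: big1 => i _.
rewrite -scalemxAl.
have -> : (vbasis V)`_i *m (vpick (lker f))^T = 0.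
  apply/rowP => k; rewrite ord1 !mxE.
  have := congr1 (fun M : 'M[R]_(1, d) => M ord0 i) hw; rewrite !mxE => h; rewrite -[in RHS]h.
  by apply: eq_bigr => j _; rewrite !mxE mulrC.
by rewrite scaler0.
Qed.
Lemma sum7 (F : 'I_7 -> R) : \sum_(i < 7) F i =
  F (inord 0) + F (inord 1) + F (inord 2) + F (inord 3) + F (inord 4) + F (inord 5) + F (inord 6).
Proof.
rewrite !big_ord_recl big_ord0 addr0 !addrA.
repeat congr (_ + _); congr F; apply: ord_inj; rewrite inordK //.
Qed.

Lemma coord7_delta m k : (m < 7)%N -> (0 < k <= 7)%N ->
  coord7 (delta_mx 0 (inord m) : 'rV[R]_7) k = (m == k.-1)%:R.
Proof.
move=> hm /andP[hk1 hk2]; rewrite /coord7 mxE eqxx /=.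
have hk : (k.-1 < 7)%N by case: k hk1 hk2.
by rewrite -(inj_eq (@ord_inj 7)) !inordK // eq_sym.
Qed.

Lemma phiD (a b c1 c2 : 'rV[R]_7) : phi a b (c1 + c2) = phi a b c1 + phi a b c2.
Proof. rewrite /phi /e3 /coord7 !mxE; ring. Qed.
Lemma phiZ (a b c : 'rV[R]_7) x : phi a b (x *: c) = x * phi a b c.
Proof. rewrite /phi /e3 /coord7 !mxE; ring. Qed.
Lemma phi0 (a b : 'rV[R]_7) : phi a b 0 = 0.
Proof. rewrite /phi /e3 /coord7 !mxE; ring. Qed.

Lemma hook_mul (v w : 'rV[R]_7) i :
  (hook v *m w^T) i ord0 = phi v (delta_mx 0 i) w.
Proof.
rewrite mxE [in RHS](row_sum_delta w).
rewrite (big_morph (phi v (delta_mx 0 i)) (phiD v (delta_mx 0 i)) (phi0 _ _)).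
by apply: eq_bigr => j _; rewrite phiZ !mxE mulrC.
Qed.

Definition dot (a b : 'rV[R]_7) := \sum_(k < 7) a ord0 k * b ord0 k.

Lemma key (v w : 'rV[R]_7) :
  \sum_(i < 7) (phi v (delta_mx 0 i) w)^+2 = dot v v * dot w w - (dot v w)^+2.
Proof.
rewrite /dot !sum7 /phi /e3 !coord7_delta //= /coord7 /=.
ring.
Qed.

Lemma dot_eq0 (a : 'rV[R]_7) : dot a a = 0 -> a = 0.
Proof.
move/eqP; rewrite psumr_eq0 => [/allP h|i _]; last by rewrite -expr2 sqr_ge0.
apply/rowP => k; rewrite mxE; have := h k (mem_index_enum k).
by rewrite /= -expr2 expf_eq0 /= => /eqP.
Qed.

Lemma hook0 : hook (0 : 'rV[R]_7) = 0.
Proof. apply/matrixP => i j; rewrite !mxE /phi /e3 /coord7 !mxE; ring. Qed.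

Lemma hook_anti (u : 'rV[R]_7) i j : hook u j i = - hook u i j.
Proof. rewrite !mxE /phi /e3; ring. Qed.

Lemma wedgeE (u v : 'rV[R]_7) a b : wedge u v a b = u ord0 a * v ord0 b - v ord0 a * u ord0 b.
Proof. by rewrite /wedge !mxE !big_ord1 !mxE. Qed.

Lemma decomp (M : 'M[R]_7) : (forall i j, M j i = - M i j) ->
  M = \sum_(k < 7) (1/2) *: wedge (delta_mx 0 k) (row k M).
Proof.
move=> anti; apply/matrixP => a b; rewrite summxE.
under eq_bigr => k _ do rewrite mxE wedgeE !mxE /= mulrBr.
rewrite sumrB.
rewrite (bigD1 a) //= big1 => [|k hk]; last by rewrite eq_sym (negbTE hk) mul0r !mulr0.
rewrite [X in _ - X](bigD1 b) //= [X in _ - (_ + X)]big1 => [|k hk]; last by rewrite eq_sym (negbTE hk) !mulr0.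
by rewrite !eqxx /= anti; field.
Qed.

Lemma wedge_kill (u v w : 'rV[R]_7) : u *m w^T = 0 -> v *m w^T = 0 -> wedge u v *m w^T = 0.
Proof. by move=> hu hv; rewrite /wedge mulmxBl -!mulmxA hu hv !mulmx0 subrr. Qed.

End S.

Theorem lemma4p10 (R : realType) (V : {vspace 'rV[R]_7}) :
  (V = fullv ->
     forall M : 'M[R]_7, (Lambda2 V M /\ hookV V M) <-> Lambda2_7 M) /\
  (V != fullv ->
     forall M : 'M[R]_7, (Lambda2 V M /\ hookV V M) <-> M = 0).
Proof.
split.
  move=> -> M; split; first by case=> _ [v _ ->]; exists v.
  case=> u ->; split; last by exists u; rewrite ?memvf.
  exists 7%N, (fun _ => 1/2), (fun k => delta_mx 0 k), (fun k => row k (hook u)).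
  split; first by move=> k; rewrite !memvf.
  by apply: decomp => i j; apply: hook_anti.
move=> VF M; split; last first.
  move=> ->; split.
    exists 0%N, (fun _ => 0), (fun _ => 0), (fun _ => 0).
    by split; [move=> [] | rewrite big_ord0].
  by exists 0; rewrite ?mem0v // hook0.
case=> [[n [c [u [w [hUW ->]]]]] [v vV hv]].
have [w0 w0n hw0] := exists_orth V VF.
have hk : hook v *m w0^T = 0.
  rewrite -hv mulmx_suml big1 // => k _.
  have [hu hw] := hUW k.
  by rewrite -scalemxAl wedge_kill ?hw0 // scaler0.
have hvw : dot v w0 = 0.
  have := congr1 (fun N : 'M[R]_1 => N ord0 ord0) (hw0 v vV).
  rewrite !mxE => <-; by apply: eq_bigr => j _; rewrite !mxE.
have := key v w0.
rewrite big1 => [|i _]; last by rewrite -hook_mul hk mxE expr0n.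
rewrite hvw expr0n subr0 => /esym/eqP; rewrite mulf_eq0 => /orP[/eqP|/eqP/dot_eq0 h].
  by move/dot_eq0=> v0; rewrite hv v0 hook0.
by move: w0n; rewrite h eqxx.
Qed.
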